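(* For every zero-normalized $\Gamma_{m,n}$-semimodule $\Delta$ one has $G_n(\Delta)=\big(G_m(\widehat{\Delta})\big)^T$, where $T$ denotes transposition (conjugation) of Young diagrams.
   Context: Let $m,n$ be coprime positive integers and $\Gamma=\{am+bn:a,b\in\mathbb{Z}_{\ge0}\}$. A $\Gamma$-semimodule is $\Delta\subset\mathbb{Z}_{\ge0}$ with $\Delta+\Gamma\subset\Delta$; zero-normalized means $\min\Delta=0$. For $p\in\{m,n\}$, a $p$-generator of $\Delta$ is $a\in\Delta$ with $a-p\notin\Delta$; there are exactly $p$ of them. Let $a_1<\dots<a_m$ be the $m$-generators and $b_1<\dots<b_n$ the $n$-generators. Put $g_m(x)=\#(([x,x+n)\cap\mathbb{Z})\setminus\Delta)$ and $g_n(x)=\#(([x,x+m)\cap\mathbb{Z})\setminus\Delta)$. Then $g_m(a_1)\ge\dots\ge g_m(a_m)$ and $g_n(b_1)\ge\dots\ge g_n(b_n)$; $G_m(\Delta)$ is the Young diagram with column heights $g_m(a_1),\dots,g_m(a_m)$ and $G_n(\Delta)$ the Young diagram with column heights $g_n(b_1),\dots,g_n(b_n)$. The dual semimodule is $\Delta^*=\{\varphi\in\mathbb{Z}:\varphi+\Delta\subset\Gamma\}$ and $\widehat{\Delta}=\Delta^*-\min\Delta^*$ is its zero-normalization; equivalently $\widehat\Delta=\max(\mathbb{Z}\setminus\Delta)-(\mathbb{Z}\setminus\Delta)$. *)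

(* Defs.v *)
From mathcomp Require Import all_boot all_order all_algebra.
From mathcomp Require Import boolp.
Set Implicit Arguments. Unset Strict Implicit. Unset Printing Implicit Defensive.
Import Order.TTheory GRing.Theory Num.Theory.

Definition inGamma (m n : nat) (z : int) : Prop :=
  exists a b : nat, z = Posz (a * m + b * n)%N.

Definition semimodule (m n : nat) (D : nat -> Prop) : Prop :=
  forall x a b : nat, D x -> D (x + a * m + b * n)%N.

(* min Delta = 0  (for Delta a subset of nat this just says 0 \in Delta). *)
Definition zero_normalized (D : nat -> Prop) : Prop :=
  D 0%N /\ forall x, D x -> (0 <= x)%N.

Definition dual (m n : nat) (D : nat -> Prop) (phi : int) : Prop :=
  forall x : nat, D x -> inGamma m n (phi + Posz x)%R.

(* hat Delta = Delta^* - min Delta^*  (a subset of Z_{>=0}). *)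
Definition hat (m n : nat) (D : nat -> Prop) (x : nat) : Prop :=
  exists phi0 : int,
    [/\ dual m n D phi0,
        (forall phi, dual m n D phi -> (phi0 <= phi)%R)
      & dual m n D (phi0 + Posz x)%R].

(* a is a p-generator of Delta: a \in Delta and a - p \notin Delta
   (a - p < 0 counts as "not in Delta"). *)
Definition is_gen (p : nat) (D : nat -> Prop) (a : nat) : Prop :=
  D a /\ ~ ((p <= a)%N /\ D (a - p)%N).

(* For a
   zero-normalized Gamma_{m,n}-semimodule all p-generators are < p + m*n
   (Delta contains Gamma, whose Frobenius number is mn-m-n), so this list
   contains all of them. *)
Definition gens (m n p : nat) (D : nat -> Prop) : seq nat :=
  [seq a <- iota 0 (p + m * n) | `[< is_gen p D a >] ].

Definition gaps_in (D : nat -> Prop) (x len : nat) : nat :=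
  count (fun y => ~~ `[< D y >]) (iota x len).

Definition Gm_heights (m n : nat) (D : nat -> Prop) : seq nat :=
  [seq gaps_in D a n | a <- gens m n m D].

Definition Gn_heights (m n : nat) (D : nat -> Prop) : seq nat :=
  [seq gaps_in D b m | b <- gens m n n D].

(* Young diagram with column heights hs (column i, 0-based, contains the
   cells (i, k) with k < hs_i), as a set of cells. *)
Definition young_diagram (hs : seq nat) (c : nat * nat) : Prop :=
  (c.1 < size hs)%N /\ (c.2 < nth 0%N hs c.1)%N.

Definition transpose_diagram (Y : nat * nat -> Prop) (c : nat * nat) : Prop :=
  Y (c.2, c.1).

(* Main.v *)
Require Import Defs.
From mathcomp Require Import all_boot all_order all_algebra.
From mathcomp Require Import boolp zify ring.
Import Order.TTheory GRing.Theory Num.Theory.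

Definition DZ (S : nat -> Prop) (z : int) : Prop :=
  match z with Posz k => S k | Negz _ => False end.

Section Aux.
Local Open Scope ring_scope.

Lemma DZ_neg S (z : int) : z < 0 -> ~ DZ S z.
Proof. case: z => [k|k] h //=; move: h; rewrite ltz_nat. Qed.

Lemma SL (s : seq nat) (P : pred nat) j : sorted ltn s ->
  (forall x y, (x <= y)%N -> P y -> P x) ->
  (j < count P s)%N = (j < size s)%N && P (nth 0%N s j).
Proof.
elim: s j => [|x s IH] j hs hP /=; first by rewrite ltn0.
have hs' := path_sorted hs. have hall := order_path_min ltn_trans hs.
case hx: (P x) => /=.
  case: j => [|j] /=; first by rewrite add1n.
  by rewrite add1n !ltnS IH.
have c0 : count P s = 0%N.
  apply/eqP; rewrite -leqn0 leqNgt -has_count; apply/hasPn => y ys.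
  apply/negP => Py. have := allP hall y ys => /ltnW lt.
  by have := hP _ _ lt Py; rewrite hx.
rewrite c0 /= ltn0; case: j => [|j] /=; first by rewrite hx.
rewrite ltnS; case: ltnP => hj //=.
apply/esym/negbTE/negP => Pn. have := allP hall _ (mem_nth 0%N hj) => /ltnW lt.
by have := hP _ _ lt Pn; rewrite hx.
Qed.

Section GL.
Variables (p N : nat) (S : nat -> Prop).
Hypotheses (p0 : (0 < p)%N) (Sp : forall x, S x -> S (x + p)%N)
  (bnd : forall a, is_gen p S a -> (a < N)%N).

Let G := [seq a <- iota 0 N | `[< is_gen p S a >]].
Let W (c : int) := count (fun x : nat => `[< DZ S (c - x%:Z) >]) (iota 0 p).
Let C (c : int) := count (fun g : nat => g%:Z <= c) G.

Lemma W_neg c : c < 0 -> W c = 0%N.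
Proof.
move=> hc; rewrite /W (eq_count (a2 := pred0)) ?count_pred0 // => x /=.
by apply: asboolF; apply: DZ_neg; lia.
Qed.

Lemma C_neg c : c < 0 -> C c = 0%N.
Proof.
move=> hc; rewrite /C (eq_count (a2 := pred0)) ?count_pred0 // => x /=.
by apply/negbTE/negP => h; lia.
Qed.

Lemma W_step c : (W (c+1) + `[< DZ S (c - (p.-1)%:Z) >] = W c + `[< DZ S (c+1) >])%N.
Proof.
rewrite /W. have [q ->] : exists q, p = q.+1 by exists p.-1; lia.
have E1 : count (fun x : nat => `[< DZ S (c + 1 - x%:Z) >]) (iota 0 q.+1) =
   (`[< DZ S (c+1) >] + count (fun x : nat => `[< DZ S (c - x%:Z) >]) (iota 0 q))%N.
  have -> : iota 0 q.+1 = 0%N :: map (addn 1) (iota 0 q) by rewrite -iotaDl.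
  rewrite /= count_map subr0; congr addn; apply: eq_count => x /=.
  by congr `[< DZ S _ >]; lia.
have E2 : count (fun x : nat => `[< DZ S (c - x%:Z) >]) (iota 0 q.+1) =
   (count (fun x : nat => `[< DZ S (c - x%:Z) >]) (iota 0 q) + `[< DZ S (c - q%:Z) >])%N.
  by rewrite -addn1 iotaD count_cat /= add0n addn0.
rewrite E1 E2 /=; lia.
Qed.

Lemma DZ_step k : `[< DZ S (Posz k) >] = (`[< DZ S (Posz k - p%:Z) >] + `[< is_gen p S k >])%N :> nat.
Proof.
have [hpk|hpk] := leqP p k.
  have -> : Posz k - p%:Z = Posz (k - p) by lia.
  rewrite /=; case: (asboolP (S (k - p))) => h.
    have hk : S k by have := Sp _ h; rewrite subnK.
    by rewrite (asboolT hk) (asboolF (P := is_gen _ _ _)) // => -[_ []].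
  rewrite add0n; congr nat_of_bool; apply/idP/idP => /asboolP H; apply/asboolP.
    by split => // -[_].
  by case: H.
rewrite (asboolF (P := DZ S (Posz k - p%:Z))); last by apply: DZ_neg; lia.
rewrite add0n /=; congr nat_of_bool; apply/idP/idP => /asboolP H; apply/asboolP.
  by split => // -[]; lia.
by case: H.
Qed.

Lemma count_ltS (s : seq nat) k :
  count (fun g => g < k.+1)%N s = (count (fun g => g < k)%N s + count_mem k s)%N.
Proof.
elim: s => //= x s ->; rewrite ltnS leq_eqVlt; case: eqP => [->|_] /=; rewrite ?ltnn; lia.
Qed.

Lemma C_step k : C (Posz k) = (C (Posz k - 1) + `[< is_gen p S k >])%N.
Proof.
rewrite /C.
have -> : count (fun g : nat => g%:Z <= Posz k) G = count (fun g => g < k.+1)%N G.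
  by apply: eq_count => g /=; apply/idP/idP; lia.
have -> : count (fun g : nat => g%:Z <= Posz k - 1) G = count (fun g => g < k)%N G.
  by apply: eq_count => g /=; apply/idP/idP; lia.
rewrite count_ltS count_uniq_mem; last by rewrite filter_uniq // iota_uniq.
congr addn; rewrite mem_filter mem_iota add0n leq0n /=.
case: (asboolP (is_gen p S k)) => h //=.
by rewrite bnd.
Qed.

Lemma GL0 c : W c = C c.
Proof.
suff H : forall k : nat, W (Posz k - 1) = C (Posz k - 1).
  case: c => k; last by rewrite W_neg ?C_neg.
  by have := H k.+1; have -> : Posz k.+1 - 1 = Posz k by lia.
elim => [|k IH]; first by rewrite W_neg ?C_neg.
have -> : Posz k.+1 - 1 = Posz k by lia.
have hs := W_step (Posz k - 1).
rewrite (_ : Posz k - 1 + 1 = Posz k) in hs; last by lia.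
rewrite (_ : Posz k - 1 - (p.-1)%:Z = Posz k - p%:Z) in hs; last by lia.
have hd := DZ_step k.
rewrite C_step -IH. lia.
Qed.

Lemma GL (t : int) (a : nat) :
  count (fun x : nat => `[< DZ S (t - x%:Z) >]) (iota a p) =
  count (fun g : nat => g%:Z + a%:Z <= t) G.
Proof.
rewrite (_ : iota a p = map (addn a) (iota 0 p)); last by rewrite -iotaDl addn0.
rewrite count_map; transitivity (W (t - a%:Z)).
  by apply: eq_count => x /=; congr `[< DZ S _ >]; lia.
by rewrite GL0; apply: eq_count => g /=; apply/idP/idP; lia.
Qed.

End GL.
End Aux.

Section NT.
Local Open Scope ring_scope.
Variables (m n : nat).
Hypotheses (m0 : (0 < m)%N) (n0 : (0 < n)%N) (cop : coprime m n).

Lemma sym1 (z : int) : inGamma m n z ->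
  inGamma m n ((m * n)%N%:Z - m%:Z - n%:Z - z) -> False.
Proof.
move=> [a [b ->]] [c [d hcd]].
have E : (m * n = (a + c + 1) * m + (b + d + 1) * n)%N by lia.
have dm : (m %| (b + d + 1))%N.
  have : (m %| (a + c + 1) * m + (b + d + 1) * n)%N by rewrite -E dvdn_mulr.
  rewrite dvdn_addr; last by apply: dvdn_mull.
  by rewrite mulnC Gauss_dvdr.
have dn : (n %| (a + c + 1))%N.
  have : (n %| (b + d + 1) * n + (a + c + 1) * m)%N by rewrite addnC -E dvdn_mull.
  rewrite dvdn_addr; last by apply: dvdn_mull.
  by rewrite mulnC Gauss_dvdr // coprime_sym.
have l1' : (0 < b + d + 1)%N by rewrite addn1.
have l2 : (0 < a + c + 1)%N by rewrite addn1.
have h1 := dvdn_leq l1' dm. have h2 := dvdn_leq l2 dn.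
have h3 : (n * m <= (a + c + 1) * m)%N by rewrite leq_mul2r h2 orbT.
have h4 : (m * n <= (b + d + 1) * n)%N by rewrite leq_mul2r h1 orbT.
have h5 : (0 < m * n)%N by rewrite muln_gt0 m0.
lia.
Qed.

End NT.
Lemma nat_of_nonneg (a : int) : (0 <= a)%R -> exists k : nat, a = Posz k.
Proof. by case: a => [k|k] // _; exists k. Qed.
Section NT2.
Local Open Scope ring_scope.
Variables (m n : nat).
Hypotheses (m0 : (0 < m)%N) (n0 : (0 < n)%N) (cop : coprime m n).

Lemma sym2 (z : int) : inGamma m n z \/
  inGamma m n ((m * n)%N%:Z - m%:Z - n%:Z - z).
Proof.
have [u [v huv]] := Bezoutz m n.
have g1 : gcdz m n = 1 by rewrite /gcdz /= (eqP cop).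
rewrite g1 in huv.
set q := ((z * v) %/ m%:Z)%Z. set b := ((z * v) %% m%:Z)%Z.
have hb0 : 0 <= b by apply: modz_ge0; rewrite eqz_nat; lia.
have hbm : b < m%:Z by apply: ltz_pmod; rewrite ltz_nat.
have ez : b = z * v - q * m%:Z by rewrite /b {2}(divz_eq (z * v) m); ring.
set a := z * u + q * n%:Z.
have hz : z = a * m%:Z + b * n%:Z.
  by rewrite /a ez -[z in LHS]mulr1 -huv; ring.
case: (lerP 0 a) => ha.
  left; have [ka eka] := nat_of_nonneg _ ha. have [kb ekb] := nat_of_nonneg _ hb0.
  exists ka, kb; rewrite hz eka ekb; lia.
right.
have [ka eka] : exists ka : nat, - a - 1 = Posz ka by apply: nat_of_nonneg; lia.
have [kb ekb] : exists kb : nat, m%:Z - 1 - b = Posz kb by apply: nat_of_nonneg; lia.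
exists ka, kb; rewrite PoszD !PoszM -eka -ekb hz; ring.
Qed.

Lemma big_inG (k : nat) : (m * n <= k)%N -> inGamma m n k.
Proof.
move=> hk; case: (sym2 k) => // -[a [b E]]; exfalso; lia.
Qed.

End NT2.

Theorem mainTheorem5 (m n : nat) (D : nat -> Prop) :
  (0 < m)%N -> (0 < n)%N -> coprime m n ->
  semimodule m n D -> zero_normalized D ->
  young_diagram (Gn_heights m n D)
  = transpose_diagram (young_diagram (Gm_heights m n (hat m n D))).
Proof.
move=> m0 n0 cop hsm [hD0 _].
have [f fE] : exists f : int, f = ((m * n)%N%:Z - m%:Z - n%:Z)%R by eexists.
have s1 := sym1 _ _ m0 n0 cop; have s2 := sym2 _ _ m0 n0 cop; rewrite -fE in s1 s2.
have Dgam a b : D (a * m + b * n)%N by have := hsm 0%N a b hD0.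
have DZadd (z g : int) : DZ D z -> inGamma m n g -> DZ D (z + g)%R.
  case: z => [k|k] //= hk [a [b ->]].
  by rewrite -PoszD; have := hsm k a b hk; rewrite addnA.
have Dbig k : (m * n <= k)%N -> D k.
  by move=> hk; have [a [b E]] := big_inG _ _ m0 n0 cop _ hk; case: E => ->.
have [F [hF1 [hF2 hF3]]] : exists F : int, ~ DZ D F /\
    (forall k, (F < k)%R -> DZ D k) /\ (F < (m * n)%N%:Z)%R.
  pose P j := (j == 0)%N || ~~ `[< D j.-1 >].
  have exP : exists j, P j by exists 0%N.
  have ubP : forall j, P j -> (j <= m * n)%N.
    move=> j /orP [/eqP -> //|]; rewrite leqNgt; apply: contra => hj.
    by apply/asboolP; apply: Dbig; lia.
  case: (ex_maxnP exP ubP) => j hPj hmax.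
  exists (Posz j - 1)%R; split; [|split].
  - case: j hPj hmax => [|j] hPj hmax; first by [].
    have -> : (Posz j.+1 - 1)%R = Posz j by lia.
    by case/orP: hPj => // /asboolP.
  - case => [k|k] hk; last by exfalso; lia.
    case: (asboolP (D k)) => // hnk; exfalso.
    have : P k.+1 by rewrite /P /=; apply/negP => /asboolP.
    move/hmax; lia.
  - have := ubP _ hPj; lia.
have dualE phi : dual m n D phi <-> ~ DZ D (f - phi)%R.
  split.
  - move=> hd; case E: (f - phi)%R => [k|k] //= hk.
    have := hd k hk; rewrite (_ : (phi + k)%R = f); last by lia.
    move=> hf; apply: (s1 f hf); rewrite subrr; by exists 0%N, 0%N.
  - move=> hn x hx; case: (s2 (phi + x%:Z)%R) => // h; exfalso; apply: hn.
    have := DZadd (Posz x) _ hx h.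
    by rewrite (_ : (Posz x + (f - (phi + x%:Z)))%R = (f - phi)%R); last by lia.
have leF phi : dual m n D phi -> (f - F <= phi)%R.
  move/dualE => h; case: (lerP (f - F) phi) => // hh; exfalso; apply: h; apply: hF2; lia.
have hatE : hat m n D = (fun x => ~ DZ D (F - x%:Z)%R).
  apply: funext => x; apply: propext; split.
  - move=> [phi0 [d0 min0 dx]].
    have e0 : phi0 = (f - F)%R.
      apply/eqP; rewrite eq_le leF // andbT; apply: min0; apply/dualE.
      by rewrite (_ : (f - (f - F))%R = F) //; lia.
    move/dualE: dx; rewrite e0.
    by rewrite (_ : (f - (f - F + x%:Z))%R = (F - x%:Z)%R) //; lia.
  - move=> hx; exists (f - F)%R; split => //.
    + by apply/dualE; rewrite (_ : (f - (f - F))%R = F) //; lia.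
    + by apply/dualE; rewrite (_ : (f - (f - F + x%:Z))%R = (F - x%:Z)%R) //; lia.
rewrite hatE; set H := fun x : nat => ~ DZ D (F - x%:Z)%R.
have Hcl x : H x -> H (x + m)%N.
  move=> hx hc; apply: hx; have gm : inGamma m n m by exists 1%N, 0%N; rewrite mul1n mul0n addn0.
  have := DZadd _ (Posz m) hc gm.
  by rewrite (_ : (F - (x + m)%N%:Z + m%:Z)%R = (F - x%:Z)%R) //; lia.
have Dcl x : D x -> D (x + n)%N.
  by move=> hx; have := hsm x 0%N 1%N hx; rewrite mul0n addn0 mul1n.
have bD a : is_gen n D a -> (a < n + m * n)%N.
  move=> [ha hn]; rewrite ltnNge; apply/negP => hle; apply: hn.
  by split; [lia | apply: Dbig; lia].
have bH a : is_gen m H a -> (a < m + m * n)%N.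
  move=> [ha hn]; rewrite ltnNge; apply/negP => hle; apply: hn.
  split; first lia.
  by apply: DZ_neg; lia.
have L1 a : gaps_in H a n = count (fun b : nat => (b%:Z + a%:Z <= F)%R) (gens m n n D).
  rewrite /gaps_in (eq_count (a2 := fun x : nat => `[< DZ D (F - x%:Z)%R >])); last first.
    by move=> y /=; rewrite /H asbool_neg negbK.
  have := GL _ _ _ n0 Dcl bD F a; rewrite /gens; apply.

have L2 b : gaps_in D b m = count (fun a : nat => (a%:Z + b%:Z <= F)%R) (gens m n m H).
  rewrite /gaps_in (eq_count (a2 := fun x : nat => `[< DZ H (F - x%:Z)%R >])); last first.
    move=> y /=; case E: (F - y%:Z)%R => [k|k] /=.
      rewrite /H (_ : (F - k%:Z)%R = Posz y); last by lia.
      by rewrite asbool_neg.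
    rewrite (asboolF (P := False)) // (asboolT (P := D y)) //.
    by apply: (hF2 (Posz y)); lia.
  have := GL _ _ _ m0 Hcl bH F b; rewrite /gens; apply.
rewrite /Gn_heights /Gm_heights.
have sB : sorted ltn (gens m n n D) by apply: sorted_filter; [exact: ltn_trans | exact: iota_ltn_sorted].
have sA : sorted ltn (gens m n m H) by apply: sorted_filter; [exact: ltn_trans | exact: iota_ltn_sorted].
set B := gens m n n D in L1 sB *; set A := gens m n m H in L2 sA *.
apply: funext => -[i j]; apply: propext.
rewrite /young_diagram /transpose_diagram /= !size_map.
split => [[hi hj]|[hj hi]].
- rewrite (nth_map 0%N) // L2 SL // in hj; last by move=> x y hxy /=; lia.
  case/andP: hj => hjA hle; split => //.
  rewrite (nth_map 0%N) // L1 SL //; last by move=> x y hxy /=; lia.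
  by rewrite hi /=; lia.
- rewrite (nth_map 0%N) // L1 SL // in hi; last by move=> x y hxy /=; lia.
  case/andP: hi => hiB hle; split => //.
  rewrite (nth_map 0%N) // L2 SL //; last by move=> x y hxy /=; lia.
  by rewrite hj /=; lia.
Qed.
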